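(* If $n$ is a non-negative integer, then $$\sum_{k = 1}^n \sum_{j = 0}^{k - 1} (-1)^{k-j+1} F_{n-j} = F_{2(\lfloor (n-1)/2 \rfloor + 1)}$$ and $$\sum_{k = 1}^n \sum_{j = 0}^{k - 1} (-1)^{k-j+1} L_{n-j} = L_{2(\lfloor (n-1)/2 \rfloor + 1)} - 2.$$
   Context: $F_n$ are the Fibonacci numbers ($F_0=0$, $F_1=1$, $F_{n}=F_{n-1}+F_{n-2}$) and $L_n$ the Lucas numbers ($L_0=2$, $L_1=1$, $L_{n}=L_{n-1}+L_{n-2}$). Empty sums are zero. *)

(* Defs.v *)
From mathcomp Require Import all_boot all_order all_algebra.
Set Implicit Arguments. Unset Strict Implicit. Unset Printing Implicit Defensive.

Fixpoint fib (n : nat) : nat :=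
  match n with
  | 0 => 0
  | 1 => 1
  | (m.+1 as p).+1 => fib p + fib m
  end.

Fixpoint lucas (n : nat) : nat :=
  match n with
  | 0 => 2
  | 1 => 1
  | (m.+1 as p).+1 => lucas p + lucas m
  end.

(* Main.v *)
Require Import Defs.
From mathcomp Require Import all_boot all_order all_algebra zify ring.
Import GRing.Theory Num.Theory.
Local Open Scope ring_scope.

Lemma Tgen (n : nat) : forall a : nat -> int,
  (\sum_(1 <= k < n.+1) \sum_(0 <= j < k) (-1) ^+ (k - j + 1)%N * a (n - j)%N)
  = \sum_(0 <= i < n.+1) (odd i)%:Z * a i.
Proof.
elim: n => [|n IH] a.
  by rewrite !big_nat1 big_geq // mul0r.
rewrite big_nat_recr //=.
have -> : \sum_(1 <= k < n.+1) \sum_(0 <= j < k) (-1) ^+ (k - j + 1)%N * a (n.+1 - j)%N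
   = \sum_(1 <= k < n.+1) \sum_(0 <= j < k) (-1) ^+ (k - j + 1)%N * (fun i => a i.+1) (n - j)%N.
  apply: eq_big_nat => k /andP[_ Hk]; apply: eq_big_nat => j /andP[_ Hj].
  by rewrite subSn //; lia.
rewrite (IH (fun i => a i.+1)) [X in _ + X]big_nat_rev /= [in RHS]big_nat_recl // mul0r add0r.
rewrite [in LHS]big_nat_cond [X in _ + X]big_nat_cond -big_split.
rewrite [in RHS]big_nat_cond.
apply: eq_bigr => i /andP[/andP[_ Hi] _].
have -> : (n.+1 - (0 + n.+1 - i.+1))%N = i.+1 by lia.
rewrite /= -mulrDl; congr (_ * _).
rewrite addn1 -signr_odd /=.
by case: (odd i).
Qed.

Lemma fibsum m :
  \sum_(0 <= i < (m.*2).+1) (odd i)%:Z * (fib i)%:Z = (fib m.*2)%:Z /\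
  \sum_(0 <= i < (m.*2).+2) (odd i)%:Z * (fib i)%:Z = (fib (m.*2).+2)%:Z.
Proof.
elim: m => [|m [IH1 IH2]]; first by rewrite !big_nat_recr //= big_geq.
have E1 : \sum_(0 <= i < (m.+1).*2.+1) (odd i)%:Z * (fib i)%:Z = (fib (m.+1).*2)%:Z.
  by rewrite doubleS big_nat_recr //= IH2 odd_double mul0r addr0.
split => //.
rewrite big_nat_recr // E1.
have -> : odd (m.+1).*2.+1 = true by rewrite /= odd_double.
have -> : fib (m.+1).*2.+2 = (fib (m.+1).*2.+1 + fib (m.+1).*2)%N by [].
by rewrite mul1r PoszD addrC.
Qed.

Lemma lucsum m :
  \sum_(0 <= i < (m.*2).+1) (odd i)%:Z * (lucas i)%:Z = (lucas m.*2)%:Z - 2 /\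
  \sum_(0 <= i < (m.*2).+2) (odd i)%:Z * (lucas i)%:Z = (lucas (m.*2).+2)%:Z - 2.
Proof.
elim: m => [|m [IH1 IH2]]; first by rewrite !big_nat_recr //= big_geq.
have E1 : \sum_(0 <= i < (m.+1).*2.+1) (odd i)%:Z * (lucas i)%:Z = (lucas (m.+1).*2)%:Z - 2.
  by rewrite doubleS big_nat_recr //= IH2 odd_double mul0r addr0.
split => //.
rewrite big_nat_recr // E1.
have -> : odd (m.+1).*2.+1 = true by rewrite /= odd_double.
have -> : lucas (m.+1).*2.+2 = (lucas (m.+1).*2.+1 + lucas (m.+1).*2)%N by [].
rewrite mul1r PoszD.
change ((lucas (m.+1).*2)%:Z - 2 + (lucas (m.+1).*2.+1)%:Z = (lucas (m.+1).*2.+1)%:Z + (lucas (m.+1).*2)%:Z - 2); ring.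
Qed.

Lemma idx_even m : absz (2 * ((((m.*2)%:Z - 1) %/ 2)%Z + 1)) = m.*2.
Proof.
have -> : ((m.*2)%:Z - 1) = (m%:Z - 1) * 2 + 1 by rewrite -muln2 PoszM; ring.
rewrite divzMDl // (divz_small (m:=1)) //.
have -> : (2 * (m%:Z - 1 + 0 + 1)) = (m.*2)%:Z by rewrite -muln2 PoszM; ring.
by [].
Qed.

Lemma idx_odd m : absz (2 * ((((m.*2.+1)%:Z - 1) %/ 2)%Z + 1)) = m.*2.+2.
Proof.
have -> : ((m.*2.+1)%:Z - 1) = m%:Z * 2 by lia.
rewrite mulzK //.
have -> : (2 * (m%:Z + 1)) = (m.*2.+2)%:Z by lia.
by [].
Qed.

Theorem proposition4 (n : nat) :
  (\sum_(1 <= k < n.+1) \sum_(0 <= j < k)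
      (-1) ^+ (k - j + 1)%N * ((fib (n - j)%N)%:Z) : int)
    = (fib (absz (2 * (((n%:Z - 1) %/ 2)%Z + 1))))%:Z
  /\
  (\sum_(1 <= k < n.+1) \sum_(0 <= j < k)
      (-1) ^+ (k - j + 1)%N * ((lucas (n - j)%N)%:Z) : int)
    = (lucas (absz (2 * (((n%:Z - 1) %/ 2)%Z + 1))))%:Z - 2.
Proof.
rewrite (Tgen n (fun i => (fib i)%:Z)) (Tgen n (fun i => (lucas i)%:Z)).
have E := odd_double_half n.
move: E; set m := n./2; case: (odd n) => E.
  have {}E : n = m.*2.+1 by rewrite -E.
  rewrite E idx_odd.
  by split; [exact: (fibsum m).2 | exact: (lucsum m).2].
have {}E : n = m.*2 by rewrite -E.
rewrite E idx_even.
by split; [exact: (fibsum m).1 | exact: (lucsum m).1].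
Qed.
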